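(* Fix $n\ge1$ and all parameters other than $\gamma_{\rm P}$, and let $(z^{Q,\star}(\gamma_{\rm P}),z^{S,\star}(\gamma_{\rm P}))$ denote the unique maximiser of $f$. There exists $\overline\gamma_{{\rm P},n}>0$ such that for every $\gamma_{\rm P}\in(0,\overline\gamma_{{\rm P},n})$: $z^{Q,i,i,\star}(\gamma_{\rm P})>0$ for all $i$; $\mathrm{sgn}(z^{S,i,\star}(\gamma_{\rm P}))=-\mathrm{sgn}(\rho_i)$ for every $i$ with $\rho_i\ne0$; and $\mathrm{sgn}(z^{Q,i,j,\star}(\gamma_{\rm P}))=\mathrm{sgn}(\rho_i\rho_j)$ for every $i\ne j$ with $\rho_i\rho_j\ne0$.
   Context: Fix an integer $n\ge1$ and parameters $\sigma>0$, $\gamma_{\rm P}>0$, and for each $i\in\{1,\dots,n\}$: $c_i>0$, $\gamma_i>0$, $\nu_i>0$, $\rho_i\in(-1,1)$. Write $\nu=(\nu_1,\dots,\nu_n)^\top$, $\rho=(\rho_1,\dots,\rho_n)^\top$. The variables are a matrix $z^Q=(z^{Q,i,j})_{i,j}\in\mathbb{R}^{n\times n}$ ($i$ row, $j$ column) and a vector $z^S=(z^{S,1},\dots,z^{S,n})^\top\in\mathbb{R}^n$. Define $f:\mathbb{R}^{n\times n}\times\mathbb{R}^n\to\mathbb{R}$ by $$f(z^Q,z^S)=-\frac1n\sum_{i=1}^n\Big(\frac{(z^{Q,i,i})^2}{2c_i}+\frac{\gamma_i}{2}\sum_{j=1}^n\nu_j^2(z^{Q,i,j})^2+\frac{\gamma_i\sigma^2}{2}(z^{S,i})^2+\frac{\gamma_i\sigma}{\sqrt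 n}z^{S,i}\sum_{j=1}^n\rho_j\nu_jz^{Q,i,j}-\frac{z^{Q,i,i}}{c_i}\Big)-\frac{\gamma_{\rm P}}{2n^2}\sum_{i=1}^n\Big(\Big(\nu_i-\nu_i\sum_{j=1}^nz^{Q,j,i}-\frac{\rho_i\sigma}{\sqrt n}\sum_{j=1}^nz^{S,j}\Big)^2+\frac{(1-\rho_i^2)\sigma^2}{n}\Big(\sum_{j=1}^nz^{S,j}\Big)^2\Big).$$ For each $\gamma_{\rm P}>0$, $f$ has a unique global maximiser. *)

(* Defs.v *)
From HB Require Import structures.
From mathcomp Require Import all_boot all_order all_algebra.
From mathcomp Require Import reals.
Set Implicit Arguments. Unset Strict Implicit. Unset Printing Implicit Defensive.
Import Order.TTheory GRing.Theory Num.Theory.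
Local Open Scope ring_scope.

(* The objective f(z^Q, z^S); zQ i j = z^{Q,i,j} (row i, column j),
   zS i = z^{S,i}. Parameters: sigma, gP = gamma_P, c, gam = gamma_i, nu, rho. *)
Definition fobj (R : realType) (n : nat) (sigma gP : R)
  (c gam nu rho : 'I_n -> R) (zQ : 'M[R]_n) (zS : 'I_n -> R) : R :=
  - (n%:R)^-1 * \sum_(i < n)
      ( zQ i i ^+ 2 / (2 * c i)
      + gam i / 2 * \sum_(j < n) nu j ^+ 2 * zQ i j ^+ 2
      + gam i * sigma ^+ 2 / 2 * zS i ^+ 2
      + gam i * sigma / Num.sqrt (n%:R) * zS i * \sum_(j < n) rho j * nu j * zQ i j
      - zQ i i / c i)
  - gP / (2 * n%:R ^+ 2) * \sum_(i < n)
      ( (nu i - nu i * \sum_(j < n) zQ j i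
          - rho i * sigma / Num.sqrt (n%:R) * \sum_(j < n) zS j) ^+ 2
      + (1 - rho i ^+ 2) * sigma ^+ 2 / n%:R * (\sum_(j < n) zS j) ^+ 2).

Definition is_global_max (R : realType) (n : nat) (sigma gP : R)
  (c gam nu rho : 'I_n -> R) (zQ : 'M[R]_n) (zS : 'I_n -> R) : Prop :=
  forall (zQ' : 'M[R]_n) (zS' : 'I_n -> R),
    fobj sigma gP c gam nu rho zQ' zS' <= fobj sigma gP c gam nu rho zQ zS.

(* Main.v *)
Require Import Defs.
From HB Require Import structures.
From mathcomp Require Import all_boot all_order all_algebra.
From mathcomp Require Import reals ring lra.
Import Order.TTheory GRing.Theory Num.Theory.
Local Open Scope ring_scope.
Lemma sg_close (R : realFieldType) (a x : R) : a != 0 -> (x - a)^+2 < a^+2 -> Num.sg x = Num.sg a.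
Proof.
move=> a0 h; case: (ltrgtP a 0) => ha; last by move: a0; rewrite ha eqxx.
- have hx : x < 0 by nra.
  by rewrite (ltr0_sg ha) (ltr0_sg hx).
- have hx : 0 < x by nra.
  by rewrite (gtr0_sg ha) (gtr0_sg hx).
Qed.

Definition gi (R : realType) (n : nat) (sigma : R) (c gam nu rho : 'I_n -> R)
  (i : 'I_n) (q : 'I_n -> R) (s : R) : R :=
  q i ^+ 2 / (2 * c i)
      + gam i / 2 * \sum_(j < n) nu j ^+ 2 * q j ^+ 2
      + gam i * sigma ^+ 2 / 2 * s ^+ 2
      + gam i * sigma / Num.sqrt (n%:R) * s * \sum_(j < n) rho j * nu j * q j
      - q i / c i.

Arguments gi {R n}.

Lemma row_ineq (R : realType) (n : nat) (sigma : R) (c gam nu rho : 'I_n -> R)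
  (i : 'I_n) (q0 q : 'I_n -> R) (s0 s : R) :
  0 < c i -> Num.sqrt (n%:R : R) != 0 ->
  (forall j, j != i -> gam i * nu j * (nu j * q0 j + sigma * s0 * rho j / Num.sqrt (n%:R : R)) = 0) ->
  gam i * nu i * (nu i * q0 i + sigma * s0 * rho i / Num.sqrt (n%:R : R)) + q0 i / c i - 1 / c i = 0 ->
  sigma * s0 + (Num.sqrt (n%:R : R))^-1 * \sum_(j < n) rho j * nu j * q0 j = 0 ->
  gam i / 2 * (\sum_(j < n) (nu j * (q j - q0 j) + sigma * (s - s0) * rho j / Num.sqrt (n%:R : R)) ^+ 2
     + (1 - (\sum_(j < n) rho j ^+ 2) / Num.sqrt (n%:R : R) ^+ 2) * (sigma * (s - s0)) ^+ 2)
  <= gi sigma c gam nu rho i q s - gi sigma c gam nu rho i q0 s0.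
Proof.
move=> c0 A0 h1 h1i h2.
set A := Num.sqrt (n%:R : R).
set u := fun j => q j - q0 j.
set w := s - s0.
have hq : forall j, q j = q0 j + u j by move=> j; rewrite /u; ring.
have hs : s = s0 + w by rewrite /w; ring.
set X1 := \sum_(j < n) nu j ^+ 2 * q0 j ^+ 2.
set X2 := \sum_(j < n) nu j ^+ 2 * q0 j * u j.
set X3 := \sum_(j < n) nu j ^+ 2 * u j ^+ 2.
set Y1 := \sum_(j < n) rho j * nu j * q0 j.
set Y2 := \sum_(j < n) rho j * nu j * u j.
set Z := \sum_(j < n) rho j ^+ 2.
have S1 : \sum_(j < n) nu j ^+ 2 * q j ^+ 2 = X1 + 2 * X2 + X3.
  rewrite /X1 /X2 /X3 mulr_sumr -!big_split /=; apply: eq_bigr => j _; rewrite hq; ring.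
have S2 : \sum_(j < n) rho j * nu j * q j = Y1 + Y2.
  rewrite /Y1 /Y2 -!big_split /=; apply: eq_bigr => j _; rewrite hq; ring.
have S3 : \sum_(j < n) (nu j * (q j - q0 j) + sigma * (s - s0) * rho j / A) ^+ 2
    = X3 + 2 * (sigma * w / A) * Y2 + (sigma * w / A) ^+ 2 * Z.
  rewrite /X3 /Y2 /Z !mulr_sumr -!big_split /=; apply: eq_bigr => j _; rewrite /u /w; ring.
have E1 : gam i * X2 + gam i * sigma * s0 / A * Y2 + u i * (q0 i / c i - 1 / c i) = 0.
  have : \sum_(j < n) u j * (gam i * nu j * (nu j * q0 j + sigma * s0 * rho j / A))
       = u i * (1 / c i - q0 i / c i).
    rewrite (bigD1 i) //= big1 ?addr0; last by move=> j /h1 ->; rewrite mulr0.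
    congr (_ * _); rewrite -(subr0 (_ * _)) -h1i; ring.
  have -> : \sum_(j < n) u j * (gam i * nu j * (nu j * q0 j + sigma * s0 * rho j / A))
     = gam i * X2 + gam i * sigma * s0 / A * Y2.
    rewrite /X2 /Y2 !mulr_sumr -big_split /=; apply: eq_bigr => j _; ring.
  move=> ->; ring.
rewrite /gi S1 S2 S3 -/A (hq i) hs.
rewrite -subr_ge0.
set LHS := (X in 0 <= X).
have -> : LHS = u i ^+ 2 / (2 * c i) + (gam i * X2 + gam i * sigma * s0 / A * Y2 + u i * (q0 i / c i - 1 / c i))
   + gam i * sigma * w * (sigma * s0 + A^-1 * Y1).
  rewrite /LHS /u /w -/X1 -/Y1; field; rewrite ?(gt_eqF c0) ?A0 //.
move: h2; rewrite -/A -/Y1 => ->; rewrite E1 mulr0 !addr0.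
by rewrite divr_ge0 ?sqr_ge0 // mulr_ge0 // ltW.
Qed.

Lemma dev (R : realFieldType) (g th D y x r : R) : 0 < g -> 0 < th -> th <= 1 -> r ^+ 2 <= 1 ->
  g / 2 * ((y + x * r) ^+ 2 + th * x ^+ 2) <= D ->
  g * th * y ^+ 2 <= 4 * D /\ g * th * x ^+ 2 <= 4 * D.
Proof.
move=> g0 t0 t1 r1 h.
have h2 : g * ((y + x * r) ^+ 2 + th * x ^+ 2) <= 2 * D.
  by move: h; rewrite mulrAC; set E := g * _; lra.
have hb : 0 <= (y + x * r) ^+ 2 by apply: sqr_ge0.
have hD : 0 <= D.
  have : 0 <= g * ((y + x * r) ^+ 2 + th * x ^+ 2).
    apply: mulr_ge0; [exact: ltW | apply: addr_ge0 => //; apply: mulr_ge0; [exact: ltW | exact: sqr_ge0]].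
  lra.
have hx : 0 <= x ^+ 2 by apply: sqr_ge0.
have hy1 : y ^+ 2 <= 2 * (y + x * r) ^+ 2 + 2 * x ^+ 2.
  have : y ^+2 <= 2 * (y + x * r) ^+ 2 + 2 * (x ^+ 2 * r ^+ 2).
    by rewrite -subr_ge0 (_ : _ - _ = (y + 2 * x * r) ^+ 2) ?sqr_ge0 //; ring.
  move=> H; apply: (le_trans H); rewrite lerD2l ler_pM2l //.
  by rewrite -[X in _ <= X]mulr1 ler_wpM2l.
split.
- have : th * y ^+ 2 <= 2 * ((y + x * r) ^+ 2 + th * x ^+ 2).
    have : th * y ^+ 2 <= th * (2 * (y + x * r) ^+ 2 + 2 * x ^+ 2) by rewrite ler_wpM2l // ltW.
    move=> H; apply: (le_trans H); rewrite -subr_ge0.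
    have -> : 2 * ((y + x * r) ^+ 2 + th * x ^+ 2) - th * (2 * (y + x * r) ^+ 2 + 2 * x ^+ 2)
      = 2 * (y + x * r) ^+ 2 * (1 - th) by ring.
    apply: mulr_ge0; [apply: mulr_ge0 => //; exact: sqr_ge0 | by rewrite subr_ge0].
  move=> H; rewrite -mulrA; apply: le_trans (_ : g * (2 * ((y + x * r) ^+ 2 + th * x ^+ 2)) <= _).
    by rewrite ler_wpM2l // ltW.
  rewrite mulrCA; lra.
- have : g * (th * x ^+ 2) <= g * ((y + x * r) ^+ 2 + th * x ^+ 2).
    by apply: ler_wpM2l; [exact: ltW | rewrite -subr_ge0 addrK sqr_ge0].
  rewrite mulrA => H; apply: (le_trans H); lra.
Qed.

Lemma sum_sq_ge (R : realDomainType) n (F : 'I_n -> R) k : F k ^+ 2 <= \sum_(j < n) F j ^+ 2.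
Proof.
rewrite (bigD1 k) //= lerDl; apply: sumr_ge0 => j _; exact: sqr_ge0.
Qed.

Lemma T_lt (R : realFieldType) n (rho : 'I_n -> R) : (1 <= n)%N -> (forall i, -1 < rho i < 1) ->
  \sum_(j < n) rho j ^+ 2 < n%:R.
Proof.
move=> hn hr.
have -> : (n%:R : R) = \sum_(j < n) 1 by rewrite sumr_const card_ord.
apply: ltr_sum.
  by apply/hasP; exists (Ordinal hn); rewrite ?mem_index_enum.
move=> j _; have := hr j; case/andP => a b; nra.
Qed.

Definition pen (R : realType) (n : nat) (sigma : R) (nu rho : 'I_n -> R)
  (zQ : 'M[R]_n) (zS : 'I_n -> R) : R :=
  \sum_(i < n)
      ( (nu i - nu i * \sum_(j < n) zQ j i
          - rho i * sigma / Num.sqrt (n%:R) * \sum_(j < n) zS j) ^+ 2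
      + (1 - rho i ^+ 2) * sigma ^+ 2 / n%:R * (\sum_(j < n) zS j) ^+ 2).
Arguments pen {R n}.

Lemma fobj_dec (R : realType) (n : nat) (sigma gP : R) (c gam nu rho : 'I_n -> R)
  (zQ : 'M[R]_n) (zS : 'I_n -> R) :
  fobj sigma gP c gam nu rho zQ zS =
  - (n%:R)^-1 * \sum_(i < n) gi sigma c gam nu rho i (fun j => zQ i j) (zS i)
  - gP / (2 * n%:R ^+ 2) * pen sigma nu rho zQ zS.
Proof. by []. Qed.

Lemma pen_ge0 (R : realType) (n : nat) (sigma : R) (nu rho : 'I_n -> R)
  (zQ : 'M[R]_n) (zS : 'I_n -> R) : (forall i, -1 < rho i < 1) -> 0 <= pen sigma nu rho zQ zS.
Proof.
move=> hr; apply: sumr_ge0 => i _; apply: addr_ge0; first exact: sqr_ge0.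
apply: mulr_ge0; last exact: sqr_ge0.
apply: mulr_ge0; last by rewrite invr_ge0 ler0n.
apply: mulr_ge0; last exact: sqr_ge0.
have := hr i; case/andP => a b; rewrite subr_ge0; nra.
Qed.

Theorem mainTheorem13 (R : realType) (n : nat) (sigma : R)
  (c gam nu rho : 'I_n -> R) :
  (1 <= n)%N -> 0 < sigma ->
  (forall i, 0 < c i) -> (forall i, 0 < gam i) -> (forall i, 0 < nu i) ->
  (forall i, -1 < rho i < 1) ->
  exists gbar : R, 0 < gbar /\
    forall gP : R, 0 < gP -> gP < gbar ->
    forall (zQ : 'M[R]_n) (zS : 'I_n -> R),
      is_global_max sigma gP c gam nu rho zQ zS ->
      (forall i, 0 < zQ i i) /\
      (forall i, rho i != 0 -> Num.sg (zS i) = - Num.sg (rho i)) /\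
      (forall i j, i != j -> rho i * rho j != 0 ->
         Num.sg (zQ i j) = Num.sg (rho i * rho j)).
Proof.
move=> hn hsig hc hg hnu hrho.
have nr1 : 1 <= (n%:R : R) by rewrite ler1n.
have nr0 : 0 < (n%:R : R) by apply: lt_le_trans nr1.
set A := Num.sqrt (n%:R : R).
have A0 : 0 < A by rewrite sqrtr_gt0.
have A2 : A ^+ 2 = n%:R by rewrite sqr_sqrtr // ltW.
set T := \sum_(j < n) rho j ^+ 2.
have hT : T < n%:R := @T_lt R n rho hn hrho.
have T0 : 0 <= T by apply: sumr_ge0 => j _; exact: sqr_ge0.
have rho2 : forall j, rho j ^+ 2 < 1 by move=> j; have := hrho j; case/andP => a b; nra.
set N := n%:R - T.
have N0 : 0 < N by rewrite subr_gt0.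
pose M i := N + rho i ^+ 2.
have M0 : forall i, 0 < M i by move=> i; rewrite /M ltr_wpDr // sqr_ge0.
pose qd i := M i / (M i + c i * gam i * nu i ^+ 2 * N).
have den0 : forall i, 0 < M i + c i * gam i * nu i ^+ 2 * N.
  move=> i; have h : 0 < c i * gam i * nu i ^+ 2 * N by rewrite !mulr_gt0 // exprn_gt0.
  have := M0 i; lra.
have qd0 : forall i, 0 < qd i by move=> i; rewrite /qd divr_gt0.
pose s0 i := - (rho i * nu i * qd i * A) / (sigma * M i).
pose q0 (i j : 'I_n) := if j == i then qd i else rho i * rho j * nu i * qd i / (M i * nu j).
pose Z0 : 'M[R]_n := \matrix_(i, j) q0 i j.
set th := 1 - T / A ^+ 2.
have th0 : 0 < th by rewrite /th A2 subr_gt0 ltr_pdivrMr // mul1r.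
have th1 : th <= 1 by rewrite /th lerBlDr lerDl divr_ge0 // sqr_ge0.
pose K := pen sigma nu rho Z0 s0 + 1.
have K0 : 0 < K by rewrite /K ltr_wpDl // pen_ge0.
pose L i := 4 * K / (gam i * th).
have L0 : forall i, 0 < L i by move=> i; rewrite /L divr_gt0 ?mulr_gt0.
pose rq i j := if q0 i j == 0 then 1 else nu j ^+ 2 * q0 i j ^+ 2 / L i.
pose rs i := if s0 i == 0 then 1 else sigma ^+ 2 * s0 i ^+ 2 / L i.
have rq0 : forall i j, 0 < rq i j.
  move=> i j; rewrite /rq; case: eqP => // h.
  have hq : 0 < q0 i j ^+ 2 by rewrite exprn_even_gt0 //; apply/eqP.
  by rewrite divr_gt0 // mulr_gt0 // exprn_gt0.
have rs0 : forall i, 0 < rs i.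
  move=> i; rewrite /rs; case: eqP => // h.
  have hq : 0 < s0 i ^+ 2 by rewrite exprn_even_gt0 //; apply/eqP.
  by rewrite divr_gt0 // mulr_gt0 // exprn_gt0.
pose S := \sum_(i < n) \sum_(j < n) (rq i j)^-1 + \sum_(i < n) (rs i)^-1.
have Sq : forall i j, (rq i j)^-1 <= S.
  move=> i j; apply: le_trans (_ : \sum_(i < n) \sum_(j < n) (rq i j)^-1 <= S); last first.
    by rewrite /S lerDl sumr_ge0 // => k _; rewrite invr_ge0 ltW.
  rewrite (bigD1 i) //= (bigD1 j) //= -addrA lerDl; apply: addr_ge0.
    by apply: sumr_ge0 => k _; rewrite invr_ge0 ltW.
  by apply: sumr_ge0 => k _; apply: sumr_ge0 => l _; rewrite invr_ge0 ltW.
have Ss : forall i, (rs i)^-1 <= S.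
  move=> i; apply: le_trans (_ : \sum_(i < n) (rs i)^-1 <= S); last first.
    by rewrite /S lerDr; apply: sumr_ge0 => k _; apply: sumr_ge0 => l _; rewrite invr_ge0 ltW.
  by rewrite (bigD1 i) //= lerDl; apply: sumr_ge0 => k _; rewrite invr_ge0 ltW.
have S0 : 0 <= S.
  apply: addr_ge0; apply: sumr_ge0 => k _; last by rewrite invr_ge0 ltW.
  by apply: sumr_ge0 => l _; rewrite invr_ge0 ltW.
exists (1 + S)^-1; split; first by rewrite invr_gt0 ltr_wpDr.
move=> gP gP0 gPb zQ zS hmax.
have gPS : gP * (1 + S) < 1.
  by move: gPb; rewrite -[X in _ < X]mul1r ltr_pdivlMr // ltr_wpDr.
have gPq : forall i j, gP < rq i j.
  move=> i j; have := Sq i j; have := rq0 i j => r0 h.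
  have : gP / rq i j < 1.
    apply: le_lt_trans gPS; rewrite ler_wpM2l ?ltW //; lra.
  by rewrite ltr_pdivrMr // mul1r.
have gPs : forall i, gP < rs i.
  move=> i; have := Ss i; have := rs0 i => r0 h.
  have : gP / rs i < 1.
    apply: le_lt_trans gPS; rewrite ler_wpM2l ?ltW //; lra.
  by rewrite ltr_pdivrMr // mul1r.
have nu0 : forall j, nu j != 0 by move=> j; rewrite gt_eqF.
have M0' : forall i, M i != 0 by move=> i; rewrite gt_eqF.
have c0 : forall i, c i != 0 by move=> i; rewrite gt_eqF.
have sig0 : sigma != 0 by rewrite gt_eqF.
have A0' : A != 0 by rewrite gt_eqF.
have h1 : forall i j, j != i ->
    gam i * nu j * (nu j * Z0 i j + sigma * s0 i * rho j / A) = 0.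
  move=> i j hj; rewrite mxE /q0 (negbTE hj) /s0.
  rewrite [X in _ * X](_ : _ = 0) ?mulr0 //; field.
  by rewrite M0' nu0 sig0 A0'.
have h1i : forall i,
    gam i * nu i * (nu i * Z0 i i + sigma * s0 i * rho i / A) + Z0 i i / c i - 1 / c i = 0.
  move=> i; rewrite mxE /q0 eqxx /s0 /qd.
  have := den0 i; have := M0 i; rewrite /M => m0 d0; field.
  by rewrite c0 (gt_eqF d0) A0' (gt_eqF m0) sig0.
have h2 : forall i, sigma * s0 i + A^-1 * \sum_(j < n) rho j * nu j * Z0 i j = 0.
  move=> i.
  have Mi : M i = A ^+ 2 - \sum_(j < n | j != i) rho j ^+ 2.
    by rewrite /M /N /T (bigD1 i) //= A2; ring.
  have Si : \sum_(j < n | j != i) rho j * nu j * Z0 i j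
      = rho i * nu i * qd i / M i * \sum_(j < n | j != i) rho j ^+ 2.
    rewrite mulr_sumr; apply: eq_bigr => j hj; rewrite mxE /q0 (negbTE hj).
    by field; rewrite nu0 M0'.
  rewrite (bigD1 i) //= Si mxE /q0 eqxx /s0.
  have m0 := M0' i; rewrite Mi in m0 *; field.
  by rewrite m0 A0' sig0.
pose D i := gi sigma c gam nu rho i (fun j => zQ i j) (zS i)
          - gi sigma c gam nu rho i (fun j => Z0 i j) (s0 i).
have Hrow : forall i, gam i / 2 *
    (\sum_(j < n) (nu j * (zQ i j - Z0 i j) + sigma * (zS i - s0 i) * rho j / A) ^+ 2
     + th * (sigma * (zS i - s0 i)) ^+ 2) <= D i.
  move=> i; exact: (@row_ineq R n sigma c gam nu rho i (fun j => Z0 i j) (fun j => zQ i j)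
     (s0 i) (zS i) (hc i) A0' (h1 i) (h1i i) (h2 i)).
have D0 : forall i, 0 <= D i.
  move=> i; apply: le_trans (Hrow i); apply: mulr_ge0; first by rewrite divr_ge0 // ltW.
  apply: addr_ge0; first by apply: sumr_ge0 => j _; exact: sqr_ge0.
  by rewrite mulr_ge0 ?sqr_ge0 // ltW.
have Dsum : \sum_(i < n) D i <= gP * K.
  have hm := hmax Z0 s0; rewrite !fobj_dec in hm.
  rewrite /D sumrB.
  set G := \sum_(i < n) gi _ _ _ _ _ _ (fun j => zQ i j) _ in hm *.
  set G0 := \sum_(i < n) gi _ _ _ _ _ _ (fun j => Z0 i j) _ in hm *.
  have P0 : 0 <= pen sigma nu rho zQ zS := @pen_ge0 R n sigma nu rho zQ zS hrho.
  have PP0 : 0 <= pen sigma nu rho Z0 s0 := @pen_ge0 R n sigma nu rho Z0 s0 hrho.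
  set P := pen sigma nu rho zQ zS in hm P0.
  set PZ := pen sigma nu rho Z0 s0 in hm PP0 K0.
  have a0 : 0 <= gP / (2 * n%:R ^+ 2) by apply: divr_ge0; [exact: ltW | apply: mulr_ge0 => //; exact: sqr_ge0].
  have aP : 0 <= gP / (2 * n%:R ^+ 2) * P by apply: mulr_ge0.
  have H1 : (n%:R)^-1 * (G - G0) <= gP / (2 * n%:R ^+ 2) * PZ.
    rewrite mulrBr; lra.
  have H2 : G - G0 <= n%:R * (gP / (2 * n%:R ^+ 2) * PZ).
    by rewrite -ler_pdivrMl.
  apply: le_trans H2 _.
  have -> : n%:R * (gP / (2 * n%:R ^+ 2) * PZ) = gP * PZ / (2 * n%:R).
    by field; rewrite gt_eqF.
  rewrite ler_pdivrMr ?mulr_gt0 //.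
  have : 0 <= gP * PZ by apply: mulr_ge0 => //; exact: ltW.
  move=> gPZ; have hK : K = PZ + 1 by [].
  have h3 : 0 <= gP * PZ * (2 * n%:R - 1) by apply: mulr_ge0 => //; lra.
  rewrite hK; nra.
have Bnd : forall i j, (nu j * (zQ i j - Z0 i j)) ^+ 2 <= gP * L i /\
                      (sigma * (zS i - s0 i)) ^+ 2 <= gP * L i.
  move=> i j.
  have Di : D i <= gP * K.
    apply: le_trans Dsum; rewrite (bigD1 i) //= lerDl.
    by apply: sumr_ge0 => k _; exact: D0.
  have hb : gam i / 2 * ((nu j * (zQ i j - Z0 i j) + sigma * (zS i - s0 i) * (rho j / A)) ^+ 2
            + th * (sigma * (zS i - s0 i)) ^+ 2) <= D i.
    apply: le_trans (Hrow i); apply: ler_wpM2l; first by rewrite divr_ge0 // ltW.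
    rewrite lerD2r mulrA.
    exact: (@sum_sq_ge R n (fun j => nu j * (zQ i j - Z0 i j) + sigma * (zS i - s0 i) * rho j / A) j).
  have r1 : (rho j / A) ^+ 2 <= 1.
    by rewrite expr_div_n A2 ler_pdivrMr // mul1r; have := rho2 j; lra.
  have [d1 d2] := @dev R (gam i) th (D i) _ _ _ (hg i) th0 th1 r1 hb.
  have gt0 : 0 < gam i * th by rewrite mulr_gt0.
  by split; rewrite /L mulrA ler_pdivlMr //; lra.
have close : forall i j, q0 i j != 0 -> Num.sg (zQ i j) = Num.sg (q0 i j).
  move=> i j hq; have := gPq i j; rewrite /rq (negbTE hq) ltr_pdivlMr // => h.
  have [b _] := Bnd i j; rewrite exprMn in b.
  have : nu j ^+ 2 * (zQ i j - Z0 i j) ^+ 2 < nu j ^+ 2 * q0 i j ^+ 2 by lra.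
  rewrite ltr_pM2l ?exprn_gt0 // mxE => h'.
  exact: sg_close.
have closeS : forall i, s0 i != 0 -> Num.sg (zS i) = Num.sg (s0 i).
  move=> i hq; have := gPs i; rewrite /rs (negbTE hq) ltr_pdivlMr // => h.
  have [_ b] := Bnd i i; rewrite exprMn in b.
  have : sigma ^+ 2 * (zS i - s0 i) ^+ 2 < sigma ^+ 2 * s0 i ^+ 2 by lra.
  rewrite ltr_pM2l ?exprn_gt0 // => h'.
  exact: sg_close.
have pos1 : forall i j, 0 < nu i * qd i / (M i * nu j).
  by move=> i j; apply: divr_gt0; apply: mulr_gt0.
have pos2 : 0 < sigma by [].
split; [|split].
- move=> i; have hq : q0 i i != 0 by rewrite /q0 eqxx gt_eqF.
  have := close i i hq; rewrite /q0 eqxx (gtr0_sg (qd0 i)).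
  by move=> /eqP; rewrite sgr_cp0.
- move=> i hr.
  have e : s0 i = rho i * (- (nu i * qd i * A / (sigma * M i))).
    by rewrite /s0; field; rewrite sig0 M0'.
  have p : 0 < nu i * qd i * A / (sigma * M i) by apply: divr_gt0; apply: mulr_gt0 => //; apply: mulr_gt0.
  have hq : s0 i != 0 by rewrite e mulf_neq0 // oppr_eq0 gt_eqF.
  by rewrite closeS // e sgrM sgrN (gtr0_sg p) mulrN1.
- move=> i j hij hr.
  have e : q0 i j = rho i * rho j * (nu i * qd i / (M i * nu j)).
    by rewrite /q0 eq_sym (negbTE hij) !mulrA.
  have hq : q0 i j != 0 by rewrite e mulf_neq0 // gt_eqF.
  by rewrite close // e sgrM (gtr0_sg (pos1 i j)) mulr1.
Qed.
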